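(* Let $f(1),f(2),\dots$ be a non-negative, non-decreasing sequence of real numbers with $f(1)=0$. Define $$a(n):=n\sum_{i=1}^{n}\frac{f(i)}{i^2}\qquad(n\ge 1).$$ Then $a(n+m)\le a(n)+a(m)+f(n+m)$ for all integers $n,m\ge 1$. *)

(* Defs.v *)
From Stdlib Require Import Reals.
Open Scope R_scope.

(* a f n := n * sum_{i=1}^{n} f(i)/i^2, written with sum_f_R0 over
   j = 0..n-1 with i = j+1. Only meaningful for n >= 1. *)
Definition a_seq (f : nat -> R) (n : nat) : R :=
  INR n * sum_f_R0 (fun j => f (S j) / (INR (S j))^2) (Nat.pred n).

(* Main.v *)
Require Import Defs.
From Stdlib Require Import Reals Lra Lia Psatz.
Open Scope R_scope.

Lemma real_step (u F y : R) : 0 <= u -> u <= F -> 1 <= y ->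
  u / (y + 1) ^ 2 <= F * (1 / y - 1 / (y + 1)).
Proof.
  intros Hu HF Hy.
  assert (E : F * (1 / y - 1 / (y + 1)) - u / (y + 1) ^ 2
             = (F * (y + 1) - u * y) / (y * (y + 1) ^ 2)) by (field; lra).
  assert (0 <= (F * (y + 1) - u * y) / (y * (y + 1) ^ 2)).
  { unfold Rdiv; apply Rmult_le_pos; [nra|]. apply Rlt_le, Rinv_0_lt_compat. apply Rmult_lt_0_compat; [lra|].
    apply pow_lt; lra. }
  lra.
Qed.

Section S.
Variable f : nat -> R.
Definition g (j : nat) := f (S j) / (INR (S j))^2.
Definition T (p : nat) := sum_f_R0 g p.

Lemma tail_bound (hnonneg : forall i : nat, (1 <= i)%nat -> 0 <= f i)
  (p : nat) (F : R) : forall k,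
  (forall i, (1 <= i)%nat -> (i <= p + k + 1)%nat -> f i <= F) ->
  T (p + k) - T p <= F * (1 / INR (p + 1) - 1 / INR (p + k + 1)).
Proof.
  induction k as [|k IH]; intros HF.
  - rewrite Nat.add_0_r. replace (T p - T p) with 0 by ring.
    assert (0 <= F).
    { apply Rle_trans with (f 1%nat); [apply hnonneg; lia | apply HF; lia]. }
    replace (1 / INR (p + 1) - 1 / INR (p + 1)) with 0 by ring. lra.
  - assert (IH' := IH (fun i h1 h2 => HF i h1 ltac:(lia))).
    replace (p + S k)%nat with (S (p + k)) by lia.
    unfold T in *. simpl sum_f_R0. unfold g at 2.
    assert (Hy : INR (p + k + 1) = INR (S (p + k))) by (f_equal; lia).
    assert (Hx : INR (S (p + k) + 1) = INR (S (p+k)) + 1) by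
      (rewrite <- S_INR; f_equal; lia).
    rewrite Hx. rewrite Hy in IH'.
    assert (Hs : INR (S (S (p + k))) = INR (S (p + k)) + 1) by (apply S_INR).
    rewrite Hs.
    assert (1 <= INR (S (p + k))) by (apply (le_INR 1); lia).
    pose proof (real_step (f (S (S (p + k)))) F (INR (S (p + k)))
      ltac:(apply hnonneg; lia) ltac:(apply HF; lia) H).
    lra.
Qed.
End S.

Theorem claim6p1 (f : nat -> R)
  (hnonneg : forall i : nat, (1 <= i)%nat -> 0 <= f i)
  (hmono : forall i j : nat, (1 <= i)%nat -> (i <= j)%nat -> f i <= f j)
  (hf1 : f 1%nat = 0) :
  forall n m : nat, (1 <= n)%nat -> (1 <= m)%nat ->
    a_seq f (n + m) <= a_seq f n + a_seq f m + f (n + m)%nat.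
Proof.
  intros n m Hn Hm.
  destruct n as [|p]; [lia|]. destruct m as [|q]; [lia|].
  set (F := f (S p + S q)%nat).
  assert (HF : forall i, (1 <= i)%nat -> (i <= S p + S q)%nat -> f i <= F).
  { intros i h1 h2. apply hmono; auto. }
  pose proof (tail_bound f hnonneg p F (S q)
               (fun i h1 h2 => HF i h1 ltac:(lia))) as B1.
  pose proof (tail_bound f hnonneg q F (S p)
               (fun i h1 h2 => HF i h1 ltac:(lia))) as B2.
  unfold a_seq, T in *.
  replace (Nat.pred (S p + S q)) with (p + S q)%nat by lia.
  replace (q + S p)%nat with (p + S q)%nat in B2 by lia.
  simpl Nat.pred.
  set (Tn := sum_f_R0 (g f) (p + S q)) in *.
  set (Tp := sum_f_R0 (fun j => f (S j) / INR (S j) ^ 2) p).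
  set (Tq := sum_f_R0 (fun j => f (S j) / INR (S j) ^ 2) q).
  change (sum_f_R0 (g f) p) with Tp in B1.
  change (sum_f_R0 (g f) q) with Tq in B2.
  replace (INR (p + 1)) with (INR (S p)) in B1 by (f_equal; lia).
  replace (INR (q + 1)) with (INR (S q)) in B2 by (f_equal; lia).
  replace (INR (p + S q + 1)) with (INR (S p + S q)) in B1, B2 by (f_equal; lia).
  change (sum_f_R0 (fun j => f (S j) / INR (S j) ^ 2) (p + S q)) with Tn.
  rewrite plus_INR in *.
  set (x := INR (S p)) in *. set (y := INR (S q)) in *.
  assert (1 <= x) by (apply (le_INR 1); lia).
  assert (1 <= y) by (apply (le_INR 1); lia).
  assert (E1 : x * (1 / x - 1 / (x + y)) = y / (x + y)) by (field; lra).
  assert (E2 : y * (1 / y - 1 / (x + y)) = x / (x + y)) by (field; lra).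
  assert (E3 : y / (x + y) + x / (x + y) = 1) by (field; lra).
  assert (C1 : x * (Tn - Tp) <= F * (y / (x + y))).
  { rewrite <- E1. replace (F * (x * (1 / x - 1 / (x + y)))) with
      (x * (F * (1 / x - 1 / (x + y)))) by ring.
    apply Rmult_le_compat_l; lra. }
  assert (C2 : y * (Tn - Tq) <= F * (x / (x + y))).
  { rewrite <- E2. replace (F * (y * (1 / y - 1 / (x + y)))) with
      (y * (F * (1 / y - 1 / (x + y)))) by ring.
    apply Rmult_le_compat_l; lra. }
  assert (F * (y / (x + y)) + F * (x / (x + y)) = F) by
    (rewrite <- Rmult_plus_distr_l, E3; ring).
  nra.
Qed.
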